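(* (i) Let $C'$ be a ternary Euclidean LCD $[n,k]$ code with $k\ge1$. Then there exist a ternary Euclidean LCD $[n,k-1]$ code $C$ with generator matrix $G$ and a vector $\mathbf{y}\in C^{\perp_E}$ with $wt(\mathbf{y})\not\equiv 0\pmod 3$ such that $C'$ is the code with generator matrix $\begin{pmatrix}\mathbf{y}\\ G\end{pmatrix}$. (ii) Let $C'$ be a quaternary Hermitian LCD $[n,k]$ code with $k\ge 1$. Then there exist a quaternary Hermitian LCD $[n,k-1]$ code $C$ with generator matrix $G$ and a vector $\mathbf{y}\in C^{\perp_H}$ of odd Hamming weight such that $C'$ is the code with generator matrix $\begin{pmatrix}\mathbf{y}\\ G\end{pmatrix}$.
   Context: Ternary and quaternary codes are linear codes over $\mathbb{F}_3$ and $\mathbb{F}_4$. An $[n,k]$ code is a $k$-dimensional subspace; a generator matrix has rows forming a basis. $wt$ is the Hamming weight. Euclidean inner product $\langle x,y\rangle_E=\sum x_iy_i$ with dual $C^{\perp_E}$; on $\mathbb{F}_4^n$ the Hermitian inner product is $\langle x,y\rangle_H=\sum x_iy_i^2$ with dual $C^{\perp_H}$. A code is (Euclidean/Hermitian) LCD if $C\cap C^{\perp}=\{0\}$. *)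

(* Defs.v *)
From HB Require Import structures.
From mathcomp Require Import all_boot all_order all_algebra all_field.
Set Implicit Arguments. Unset Strict Implicit. Unset Printing Implicit Defensive.
Import GRing.Theory.
Local Open Scope ring_scope.

(* Linear codes of length n over a field F are row spaces (mxalgebra) of
   generator matrices G : 'M[F]_(m, n); a codeword is a row vector
   c : 'rV[F]_n with (c <= G)%MS. An [n,k] code is the row space of a
   row-free (full row rank) k x n matrix. *)

Definition ipE (F : fieldType) (n : nat) (x y : 'rV[F]_n) : F :=
  \sum_(i < n) x 0 i * y 0 i.

(* Hermitian inner product <x,y>_H = sum x_i y_i^2 (for F_4) *)
Definition ipH (F : fieldType) (n : nat) (x y : 'rV[F]_n) : F :=
  \sum_(i < n) x 0 i * (y 0 i) ^+ 2.

Definition wt (F : fieldType) (n : nat) (x : 'rV[F]_n) : nat :=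
  #|[set i : 'I_n | x 0 i != 0]|.

Definition in_dual (F : fieldType) (n m : nat)
  (ip : 'rV[F]_n -> 'rV[F]_n -> F) (G : 'M[F]_(m, n)) (x : 'rV[F]_n) : Prop :=
  forall c : 'rV[F]_n, (c <= G)%MS -> ip x c = 0.

Definition LCD (F : fieldType) (n m : nat)
  (ip : 'rV[F]_n -> 'rV[F]_n -> F) (G : 'M[F]_(m, n)) : Prop :=
  forall x : 'rV[F]_n, (x <= G)%MS -> in_dual ip G x -> x = 0.

(* Main.v *)
From HB Require Import structures.

From mathcomp Require Import all_boot all_order all_algebra all_field.
From Stdlib Require Import Classical.
From mathcomp Require Import ring.
Require Import Defs.
Import GRing.Theory.
Open Scope ring_scope.

Lemma F3sq : forall t : 'F_3, t * t = (t != 0)%:R.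
Proof. move=> t. apply/val_inj. by case: t => -[|[|[|m]]] hm //=. Qed.

Lemma F3two : (2 : 'F_3) != 0.
Proof. by apply/eqP => /(congr1 val) /=. Qed.

Lemma lcd_nonzero (F : fieldType) n k (ip : 'rV[F]_n -> 'rV[F]_n -> F) (G' : 'M_(k.+1,n)) :
  row_free G' -> LCD ip G' ->
  (forall x z, (x <= G')%MS -> (z <= G')%MS -> ip x z = 0) -> False.
Proof.
move=> fG lG H.
have G0 : G' = 0.
  apply/row_matrixP => i; rewrite row0; apply: lG; first exact: row_sub.
  by move=> c cG; apply: H => //; exact: row_sub.
by move: fG; rewrite G0 /row_free mxrank0.
Qed.

Lemma ipE_lin1 (F : fieldType) n a (x z w : 'rV[F]_n) :
  ipE (a *: x + z) w = a * ipE x w + ipE z w.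
Proof.
rewrite /ipE mulr_sumr -big_split; apply: eq_bigr => i _.
by rewrite !mxE mulrDl mulrA.
Qed.

Lemma ipE_sym (F : fieldType) n (x w : 'rV[F]_n) : ipE x w = ipE w x.
Proof. by apply: eq_bigr => i _; rewrite mulrC. Qed.

Lemma ipE_v (F : fieldType) n (x w : 'rV[F]_n) : x *m w^T = (ipE x w)%:M.
Proof.
apply/matrixP => i j; rewrite !ord1 !mxE eqxx mulr1n.
by apply: eq_bigr => l _; rewrite !mxE.
Qed.

Lemma wtE3 n (y : 'rV['F_3]_n) : ipE y y = (wt y)%:R.
Proof.
rewrite /wt -sum1_card natr_sum big_mkcond /=; apply: eq_bigr => i _.
by rewrite inE F3sq; case: (y 0 i != 0).
Qed.

Lemma rebase (F : fieldType) m k n (B : 'M[F]_(m,n)) :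
  m = k -> row_free B -> exists G : 'M[F]_(k,n), row_free G /\ (G :=: B)%MS.
Proof. move=> e; subst k => fB; exists B; split => //; exact: eqmx_refl. Qed.

Lemma mx11_eq0 (F : fieldType) (M : 'M[F]_1) : (M == 0) = (M 0 0 == 0).
Proof.
apply/eqP/eqP => [->|h]; first by rewrite mxE.
by apply/matrixP => i j; rewrite !ord1 h mxE.
Qed.

Lemma split_lcd (F : fieldType) (n k : nat) (ip : 'rV[F]_n -> 'rV[F]_n -> F)
  (G' : 'M[F]_(k.+1, n)) (y : 'rV[F]_n) (v : 'cV[F]_n) :
  row_free G' -> LCD ip G' -> (y <= G')%MS -> ip y y != 0 ->
  (forall x, x *m v = (ip x y)%:M) ->
  (forall x z, ip x z = 0 -> ip z x = 0) ->
  (forall x w c a, ip x w = 0 -> ip x c = 0 -> ip x (a *: w + c) = 0) ->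
  exists G : 'M[F]_(k, n),
    [/\ row_free G, LCD ip G, in_dual ip G y & (col_mx y G == G')%MS].
Proof.
move=> fG' lG' yG' yy0 H1 H2 H3.
have ipv x : ip x y = (x *m v) 0 0 by rewrite H1 mxE eqxx mulr1n.
set C := (G' :&: kermx v)%MS.
have memC x : (x <= C)%MS = (x <= G')%MS && (ip x y == 0).
  by rewrite sub_capmx sub_kermx mx11_eq0 ipv.
set a := fun x => ip x y / ip y y.
have decomp x : x = a x *: y + (x - a x *: y) by rewrite addrC subrK.
have inC x : (x <= G')%MS -> (x - a x *: y <= C)%MS.
  move=> xG; rewrite memC -scaleNr addmx_sub ?scalemx_sub //=.
  rewrite ipv mulmxDl -scalemxAl mxE [in X in _ + X]mxE -!ipv.
  by rewrite /a mulNr divfK // subrr.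
have sumE : (y + C == G')%MS.
  apply/andP; split; first by rewrite addsmx_sub yG' capmxSl.
  apply/row_subP => i; rewrite (decomp (row i G')).
  by apply: addmx_sub_adds; [rewrite scalemx_sub | rewrite inC // row_sub].
have cap0 : \rank (y :&: C)%MS = 0%N.
  apply/eqP; rewrite mxrank_eq0 -submx0; apply/row_subP => i.
  have ry : (row i (y :&: C)%MS <= y)%MS := submx_trans (row_sub i _) (capmxSl _ _).
  have rC : (row i (y :&: C)%MS <= C)%MS := submx_trans (row_sub i _) (capmxSr _ _).
  case/sub_rVP: ry rC => b ->; rewrite memC => /andP[_].
  rewrite ipv -scalemxAl mxE -(ipv y).
  rewrite mulf_eq0 (negbTE yy0) orbF => /eqP ->.
  by rewrite scale0r sub0mx.
have y0 : y != 0 by apply: contraNneq yy0 => e; rewrite ipv e mul0mx mxE.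
have rC : \rank C = k.
  have := mxrank_sum_cap y C; rewrite cap0 addn0 (eqmx_rank sumE).
  by rewrite (eqP fG') rank_rV y0 => /eqP; rewrite add1n eqSS => /eqP.
have [G [fG eqG]] := @rebase _ _ _ _ _ rC (row_base_free C).
have eqGC : (G :=: C)%MS by apply: eqmx_trans eqG (eq_row_base C).
exists G; split => //.
- move=> x; rewrite eqGC => xC xd.
  apply: lG'; first by move: xC; rewrite memC => /andP[].
  move=> c cG; rewrite (decomp c); apply: H3.
    by move: xC; rewrite memC => /andP[_ /eqP].
  by apply: xd; rewrite eqGC inC.
- by move=> c; rewrite eqGC memC => /andP[_ /eqP /H2].
- have e : (col_mx y G :=: y + C)%MS := eqmx_trans (eqmx_sym (addsmxE y G)) (adds_eqmx (eqmx_refl y) eqGC).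
  by case/andP: sumE => s1 s2; apply/andP; split; rewrite e.
Qed.

Arguments ipE_sym {F n}.
Arguments ipE_lin1 {F n}.
Arguments split_lcd {F n k ip G' y v}.
Arguments lcd_nonzero {F n k ip G'}.

Lemma ipE_add1 (F : fieldType) n (x z w : 'rV[F]_n) : ipE (x + z) w = ipE x w + ipE z w.
Proof. by rewrite -{1}(scale1r x) ipE_lin1 mul1r. Qed.
Arguments ipE_add1 {F n}.
Lemma ipE_add2 (F : fieldType) n (x z w : 'rV[F]_n) : ipE w (x + z) = ipE w x + ipE w z.
Proof. by rewrite ipE_sym ipE_add1 !(ipE_sym _ w). Qed.
Arguments ipE_add2 {F n}.

Lemma partE (F : fieldType) n k (G' : 'M[F]_(k.+1, n)) :
     (2 : F) != 0 -> row_free G' -> LCD (@ipE _ n) G' ->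
     exists (G : 'M[F]_(k, n)) (y : 'rV[F]_n),
       [/\ row_free G, LCD (@ipE _ n) G, in_dual (@ipE _ n) G y,
           ipE y y != 0 & (col_mx y G == G')%MS].
Proof.
move=> two fG lG.
have [[y [yG yy]]|H] := classic (exists y : 'rV[F]_n, (y <= G')%MS /\ ipE y y != 0).
  have H2 (x z : 'rV[F]_n) : ipE x z = 0 -> ipE z x = 0 by rewrite ipE_sym.
  have H3 (x w c : 'rV[F]_n) a : ipE x w = 0 -> ipE x c = 0 -> ipE x (a *: w + c) = 0.
    by move=> h1 h2; rewrite ipE_sym ipE_lin1 ipE_sym h1 ipE_sym h2 mulr0 addr0.
  have [G [fG' lG' dG cG]] := split_lcd fG lG yG yy (fun x => @ipE_v _ _ x y) H2 H3.
  by exists G, y; split.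
exfalso; apply: (lcd_nonzero fG lG) => x z xG zG.
have hz w : (w <= G')%MS -> ipE w w = 0.
  by move=> wG; apply/eqP; apply: contra_notT H => ww; exists w.
have := hz (x + z) (addmx_sub xG zG).
rewrite !ipE_add1 !ipE_add2 (hz x) // (hz z) //.
rewrite add0r addr0 (ipE_sym z) -mulr2n -mulr_natr => /eqP.
by rewrite mulf_eq0 (negbTE two) orbF => /eqP.
Qed.

Lemma part1 n k (G' : 'M['F_3]_(k.+1, n)) :
     row_free G' -> LCD (@ipE _ n) G' ->
     exists (G : 'M['F_3]_(k, n)) (y : 'rV['F_3]_n),
       [/\ row_free G, LCD (@ipE _ n) G, in_dual (@ipE _ n) G y,
           (wt y %% 3 != 0)%N & (col_mx y G == G')%MS].
Proof.
move=> fG lG; have [G [y [a b c d e]]] := @partE _ _ _ _ F3two fG lG.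
exists G, y; split => //.
have : ~~ (3 %| wt y)%N by rewrite (dvdn_pcharf (pchar_Fp _)) // -wtE3.
done.
Qed.

Section Herm.
Variable F : finFieldType.
Hypothesis h4 : #|F| = 4%N.

Lemma ch2 : 2%N \in [pchar F].
Proof. by apply: (@card_finPcharP F 2 2) => //; rewrite h4. Qed.

Lemma fr4 (x : F) : x ^+ 4 = x.
Proof. by rewrite -{2}(expf_card x) h4. Qed.

Lemma sqD (a b : F) : (a + b) ^+ 2 = a ^+ 2 + b ^+ 2.
Proof. by rewrite -!(pFrobenius_autE ch2) rmorphD. Qed.

Lemma ipH_lin1 n a (x z w : 'rV[F]_n) :
  ipH (a *: x + z) w = a * ipH x w + ipH z w.
Proof.
rewrite /ipH mulr_sumr -big_split; apply: eq_bigr => i _.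
rewrite !mxE /=; ring.
Qed.

Lemma ipH_lin2 n a (x z w : 'rV[F]_n) :
  ipH w (a *: x + z) = a ^+ 2 * ipH w x + ipH w z.
Proof.
rewrite /ipH mulr_sumr -big_split; apply: eq_bigr => i _.
rewrite !mxE sqD /=; ring.
Qed.

Lemma ipH_conj n (x z : 'rV[F]_n) : ipH z x = (ipH x z) ^+ 2.
Proof.
rewrite /ipH -[RHS](pFrobenius_autE ch2) rmorph_sum; apply: eq_bigr => i _.
by rewrite /= (pFrobenius_autE ch2) exprMn -exprM fr4 mulrC.
Qed.

Lemma ipH_v n (x y : 'rV[F]_n) :
  x *m (map_mx (fun t => t ^+ 2) y)^T = (ipH x y)%:M.
Proof.
apply/matrixP => i j; rewrite !ord1 !mxE eqxx mulr1n.
by apply: eq_bigr => l _; rewrite !mxE.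
Qed.

Lemma cube (t : F) : t * t ^+ 2 = (t != 0)%:R.
Proof.
have [->|t0] := eqVneq t 0; first by rewrite mul0r.
rewrite -exprS /=; apply: (mulfI t0); rewrite mulr1 -exprS; exact: fr4.
Qed.

Lemma wtE4 n (y : 'rV[F]_n) : ipH y y = (wt y)%:R.
Proof.
rewrite /wt -sum1_card natr_sum big_mkcond /=; apply: eq_bigr => i _.
by rewrite inE cube; case: (y 0 i != 0).
Qed.

Lemma partH n k (G' : 'M[F]_(k.+1, n)) :
     row_free G' -> LCD (@ipH _ n) G' ->
     exists (G : 'M[F]_(k, n)) (y : 'rV[F]_n),
       [/\ row_free G, LCD (@ipH _ n) G, in_dual (@ipH _ n) G y,
           odd (wt y) & (col_mx y G == G')%MS].
Proof.
move=> fG lG.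
have [[y [yG yy]]|H] := classic (exists y : 'rV[F]_n, (y <= G')%MS /\ ipH y y != 0).
  have H2 (x z : 'rV[F]_n) : ipH x z = 0 -> ipH z x = 0.
    by move=> h; rewrite ipH_conj h expr0n.
  have H3 (x w c : 'rV[F]_n) a : ipH x w = 0 -> ipH x c = 0 -> ipH x (a *: w + c) = 0.
    by move=> h1 h2; rewrite ipH_lin2 h1 h2 mulr0 addr0.
  have [G [fG' lG' dG cG]] := split_lcd fG lG yG yy (fun x => @ipH_v _ x y) H2 H3.
  exists G, y; split => //.
  move: yy; rewrite wtE4 -(dvdn_pcharf ch2) dvdn2; exact: negbNE.
exfalso; apply: (lcd_nonzero fG lG) => x z xG zG.
have hz w : (w <= G')%MS -> ipH w w = 0.
  by move=> wG; apply/eqP; apply: contra_notT H => ww; exists w.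
have e a : a * ipH x z + a ^+ 2 * (ipH x z) ^+ 2 = 0.
  have := hz (a *: x + z) (addmx_sub (scalemx_sub a xG) zG).
  rewrite ipH_lin1 !ipH_lin2 (hz x) // (hz z) // (@ipH_conj _ x z).
  by rewrite mulr0 add0r addr0.
have t2 : ipH x z ^+ 2 = ipH x z.
  by have := e 1; rewrite mul1r expr1n mul1r => /eqP; rewrite addr_eq0 (oppr_pchar2 ch2) => /eqP /esym.
have [b b0 b1] : exists2 b : F, b != 0 & b != 1.
  have : ~~ ([set: F] \subset [set 0; 1]).
    apply/negP => /subset_leq_card; rewrite cardsT h4 cards2.
    by case: (_ != _).
  by case/subsetPn => b _; rewrite !inE negb_or => /andP[]; exists b.
have := e b; rewrite t2 -mulrDl => /eqP; rewrite mulf_eq0 => /orP[|/eqP //].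
rewrite addr_eq0 (oppr_pchar2 ch2) expr2 -{1}(mulr1 b) => /eqP /(mulfI b0) /esym /eqP.
by rewrite (negbTE b1).
Qed.
End Herm.

Theorem theorem3p12 :
  (forall (n k : nat) (G' : 'M['F_3]_(k.+1, n)),
     row_free G' -> LCD (@ipE _ n) G' ->
     exists (G : 'M['F_3]_(k, n)) (y : 'rV['F_3]_n),
       [/\ row_free G, LCD (@ipE _ n) G, in_dual (@ipE _ n) G y,
           (wt y %% 3 != 0)%N & (col_mx y G == G')%MS])
  /\
  (forall (F : finFieldType), #|F| = 4%N ->
   forall (n k : nat) (G' : 'M[F]_(k.+1, n)),
     row_free G' -> LCD (@ipH _ n) G' ->
     exists (G : 'M[F]_(k, n)) (y : 'rV[F]_n),
       [/\ row_free G, LCD (@ipH _ n) G, in_dual (@ipH _ n) G y,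
           odd (wt y) & (col_mx y G == G')%MS]).
Proof.
split; first exact: part1.
move=> F h4 n k G'; exact: partH.
Qed.
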